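(* Let $F$ be an imaginary CM field. Let $\rho:G_F\to\operatorname{GL}_n(\overline{\mathbb{Q}}_\ell)$ and $\sigma:G_F\to\operatorname{GL}_m(\overline{\mathbb{Q}}_\ell)$ be polarizable, irreducible Galois representations. (1) If $n$ is odd, then $\rho$ is totally odd. (2) If $\rho\otimes\sigma$ is irreducible and two of $\{\rho,\sigma,\rho\otimes\sigma\}$ are totally odd, then all three are totally odd.
   Context: $F$ is a totally imaginary quadratic extension of a totally real field $F^+$, and $\delta_{F/F^+}$ is the quadratic character of $G_{F^+}$ attached to $F/F^+$. For an infinite place $v$ of $F^+$, $c_v\in G_{F^+}$ denotes a complex conjugation associated to $v$. For continuous $r:G_F\to\operatorname{GL}_n(\overline{\mathbb{Q}}_\ell)$ and $\mu:G_{F^+}\to\overline{\mathbb{Q}}_\ell^\times$, the pair $(r,\mu)$ is polarized if for some (equivalently every) infinite place $v$ of $F^+$ there are $\epsilon_v\in\{\pm1\}$ and a non-degenerate pairing $\langle\ ,\ \rangle_v$ on $\overline{\mathbb{Q}}_\ell^n$ with $\langle x,y\rangle_v=\epsilon_v\langle y,x\rangle_v$ and $\langle r(g)x,r(c_vgc_v)y\rangle_v=\mu(g)\langle x,y\rangle_v$ for all $x,y$ and $g\in G_F$, and moreover (after replacing $\mu$ by $\mu\delta_{F/F^+}$ if necessary) $\epsilon_v=-\mu(c_v)$ for all $v$. $r$ is polarizable if such a $\mu$ exists. A polarized $(r,\mu)$ is totally odd if $\epsilon_v=1$ for all $v\mid\infty$; a polarizable irreducible $r$ is called totally odd if it is totally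 odd with respect to its polarization. If $(r,\mu)$ and $(s,\chi)$ are polarized then $(r\otimes s,\mu\chi\delta_{F/F^+})$ is polarized; this is the polarization used for $\rho\otimes\sigma$. *)

(* Defs.v *)
From HB Require Import structures.
From mathcomp Require Import all_boot all_order all_algebra all_field.
From mathcomp Require Import mxtens.
From Stdlib Require Import ClassicalEpsilon.
Set Implicit Arguments. Unset Strict Implicit. Unset Printing Implicit Defensive.
Import Order.TTheory GRing.Theory Num.Theory.
Local Open Scope ring_scope.

(* Qbar is modelled by algC; elements of absolute Galois groups are field
   automorphisms of algC (functions algC -> algC). Subfields of algC are
   predicates algC -> Prop. *)

Definition is_aut (g : algC -> algC) : Prop :=
  [/\ forall x y, g (x + y) = g x + g y,
      forall x y, g (x * y) = g x * g y,
      g 1 = 1 & bijective g].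

Definition is_embedding (F : algC -> Prop) (e : algC -> algC) : Prop :=
  [/\ forall x y, F x -> F y -> e (x + y) = e x + e y,
      forall x y, F x -> F y -> e (x * y) = e x * e y &
      e 1 = 1].

Definition is_subfield (F : algC -> Prop) : Prop :=
  [/\ F 0, F 1, forall x y, F x -> F y -> F (x - y),
      forall x y, F x -> F y -> F (x * y) &
      forall x, F x -> F x^-1].

Definition is_number_field (F : algC -> Prop) : Prop :=
  is_subfield F /\
  exists s : seq algC, forall x, F x ->
    exists c : seq rat, x = \sum_(i < size s) ratr (nth 0 c i) * s`_i.

Definition totally_real (F : algC -> Prop) : Prop :=
  forall e, is_embedding F e -> forall x, F x -> e x \is Num.real.

Definition totally_imaginary (F : algC -> Prop) : Prop :=
  forall e, is_embedding F e -> exists2 x, F x & e x \isn't Num.real.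

Definition quadratic_ext (F Fp : algC -> Prop) : Prop :=
  (forall x, Fp x -> F x) /\
  exists a, [/\ F a, ~ Fp a &
    forall x, F x -> exists b c, [/\ Fp b, Fp c & x = b + c * a]].

Definition CM_pair (F Fp : algC -> Prop) : Prop :=
  [/\ is_number_field Fp, is_subfield F, totally_real Fp,
      totally_imaginary F & quadratic_ext F Fp].

Definition in_Gal (F : algC -> Prop) (g : algC -> algC) : Prop :=
  is_aut g /\ forall x, F x -> g x = x.

(* complex conjugations: the G_Q-conjugates g^{-1} o conj o g of the
   complex conjugation of algC; those are exactly the complex conjugations
   c_v attached to the infinite places v of a totally real field. *)
Definition complex_conj (c : algC -> algC) : Prop :=
  exists2 g, is_aut g & forall x, g (c x) = (g x)^*.

Definition deltaF (K : fieldType) (F : algC -> Prop) (g : algC -> algC) : K :=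
  if excluded_middle_informative (in_Gal F g) then 1 else -1.

(* continuous-ness dropped *)
Definition is_rep (K : fieldType) (n : nat) (F : algC -> Prop)
    (r : (algC -> algC) -> 'M[K]_n) : Prop :=
  forall g h, in_Gal F g -> in_Gal F h ->
    r g \in unitmx /\ r (g \o h) = r g *m r h.

Definition is_character (K : fieldType) (Fp : algC -> Prop)
    (mu : (algC -> algC) -> K) : Prop :=
  forall g h, in_Gal Fp g -> in_Gal Fp h ->
    mu g != 0 /\ mu (g \o h) = mu g * mu h.

(* irreducible, with the mathcomp convention (row vectors, right action) *)
Definition irreducible_rep (K : fieldType) (n : nat) (F : algC -> Prop)
    (r : (algC -> algC) -> 'M[K]_n) : Prop :=
  (0 < n)%N /\
  forall U : 'M[K]_n, (forall g, in_Gal F g -> (U *m r g <= U)%MS) ->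
    U = 0 \/ row_full U.

Definition polarization_at (K : fieldType) (n : nat) (F : algC -> Prop)
    (r : (algC -> algC) -> 'M[K]_n) (mu : (algC -> algC) -> K)
    (c : algC -> algC) (eps : K) (P : 'M[K]_n) : Prop :=
  [/\ P \in unitmx, P^T = eps *: P &
      forall g, in_Gal F g -> (r g)^T *m P *m r (c \o g \o c) = mu g *: P].

Definition polarized (K : fieldType) (n : nat) (F Fp : algC -> Prop)
    (r : (algC -> algC) -> 'M[K]_n) (mu : (algC -> algC) -> K) : Prop :=
  is_character Fp mu /\
  forall c, complex_conj c -> exists eps, exists P,
    [/\ eps = 1 \/ eps = -1, polarization_at F r mu c eps P & eps = - mu c].

Definition totally_odd (K : fieldType) (n : nat) (F Fp : algC -> Prop)
    (r : (algC -> algC) -> 'M[K]_n) (mu : (algC -> algC) -> K) : Prop :=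
  polarized F Fp r mu /\
  forall c, complex_conj c -> exists P, polarization_at F r mu c 1 P.

Definition tens_rep (K : fieldType) (n m : nat)
    (r : (algC -> algC) -> 'M[K]_n) (s : (algC -> algC) -> 'M[K]_m) :
    (algC -> algC) -> 'M[K]_(n * m) :=
  fun g => r g *t s g.

Definition tens_char (K : fieldType) (F : algC -> Prop)
    (mu chi : (algC -> algC) -> K) : (algC -> algC) -> K :=
  fun g => mu g * chi g * deltaF K F g.

(* Main.v *)
Require Import Defs.
From HB Require Import structures.
From mathcomp Require Import all_boot all_order all_algebra all_field.
From mathcomp Require Import mxtens.
From mathcomp Require Import ring.
From Stdlib Require Import ClassicalEpsilon.
Import Order.TTheory GRing.Theory Num.Theory.
Local Open Scope ring_scope.

Lemma aut_sub (g : algC -> algC) : is_aut g -> forall x y, g (x - y) = g x - g y.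
Proof.
move=> [gD _ _ _] x y.
have : g (x - y) + g y = g x by rewrite -gD subrK.
by move=> <-; rewrite addrK.
Qed.

Lemma aut_comp g h : is_aut g -> is_aut h -> is_aut (g \o h).
Proof.
move=> [gD gM g1 gb] [hD hM h1 hb]; split => /=.
- by move=> x y; rewrite hD gD.
- by move=> x y; rewrite hM gM.
- by rewrite h1 g1.
- exact: bij_comp.
Qed.

Lemma subfield_2 (Fp : algC -> Prop) : is_subfield Fp -> forall c, Fp c -> Fp (c / 2).
Proof.
rewrite /is_subfield => -[F0 F1 FB FM FV] c Fc.
apply: FM => //; apply: FV.
have -> : (2 : algC) = 1 - (0 - 1) by ring.
by apply: (FB) => //; apply: (FB).
Qed.

Section Quad.
Variables (F Fp : algC -> Prop) (hCM : CM_pair F Fp).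

Lemma CM_sub x : Fp x -> F x.
Proof. by case: hCM => _ _ _ _ [H _]; apply: H. Qed.

Lemma galF_galFp g : in_Gal F g -> in_Gal Fp g.
Proof. by move=> [ga gF]; split => // x /CM_sub; apply: gF. Qed.

Lemma conj_notF {c} : complex_conj c -> ~ in_Gal F c.
Proof.
case=> g ga hg [_ cF]; case: ga => gD gM g1 gb.
case: hCM => _ _ _ hI _.
have emb : is_embedding F g by split => // x y _ _.
have [x Fx] := hI g emb.
by rewrite CrealE -hg cF // eqxx.
Qed.

Lemma deltaF_conj (K : fieldType) c : complex_conj c -> deltaF K F c = -1.
Proof.
by move=> cc; rewrite /deltaF; case: excluded_middle_informative => // H; case: (conj_notF cc H).
Qed.

Lemma deltaF_galF (K : fieldType) g : in_Gal F g -> deltaF K F g = 1.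
Proof. by rewrite /deltaF; case: excluded_middle_informative. Qed.

Lemma quad_data : exists a b0 c0, [/\ F a, ~ Fp a, Fp b0, Fp c0 & a * a = b0 + c0 * a] /\
   forall x, F x -> exists b c, [/\ Fp b, Fp c & x = b + c * a].
Proof.
case: hCM => _ [_ _ _ FM _] _ _ [_ [a [Fa nFa Hx]]].
have [b0 [c0 [Fb Fc E]]] := Hx _ (FM _ _ Fa Fa).
by exists a, b0, c0; split.
Qed.

Lemma galF_iff g a b0 c0 : F a -> Fp b0 -> Fp c0 -> 
  (forall x, F x -> exists b c, [/\ Fp b, Fp c & x = b + c * a]) ->
  in_Gal Fp g -> in_Gal F g <-> g a = a.
Proof.
move=> Fa _ _ Hx [[gD gM g1 gb] gFp]; split; first by case=> _; apply.
move=> ga; split => // x /Hx [b [c [Fb Fc ->]]].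
by rewrite gD gM ga !gFp.
Qed.

Lemma gal_root g a b0 c0 : Fp b0 -> Fp c0 -> a * a = b0 + c0 * a ->
  in_Gal Fp g -> g a = a \/ g a = c0 - a.
Proof.
move=> Fb Fc E [[gD gM g1 gb] gFp].
have E' : g a * g a = b0 + c0 * g a by rewrite -gM E gD gM (gFp _ Fb) (gFp _ Fc).
have : (g a - a) * (g a - (c0 - a)) = 0.
  have -> : (g a - a) * (g a - (c0 - a)) = (g a * g a - c0 * g a) - (a * a - c0 * a) by ring.
  by rewrite E' E; ring.
move/eqP; rewrite mulf_eq0 !subr_eq0 => /orP [] /eqP H; [by left | by right].
Qed.

Lemma deltaF_mul (K : fieldType) g h : in_Gal Fp g -> in_Gal Fp h ->
  deltaF K F (g \o h) = deltaF K F g * deltaF K F h.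
Proof.
move=> Hg Hh.
have [a [b0 [c0 [[Fa nFa Fb Fc E] Hx]]]] := quad_data.
have Hgh : in_Gal Fp (g \o h).
  case: Hg Hh => ga gF [ha hF]; split; first exact: aut_comp.
  by move=> x Fx /=; rewrite hF ?gF.
have ne : c0 - a <> a.
  move=> e; apply: nFa.
  have -> : a = c0 / 2.
    have -> : c0 = (c0 - a) + a by ring.
    by rewrite e; field.
  by apply: subfield_2 => //; case: hCM => [[]].
have iff := fun k => @galF_iff k a b0 c0 Fa Fb Fc Hx.
have gsub : g (c0 - a) = c0 - g a.
  by case: Hg => ga gF; rewrite aut_sub // gF.
have Rg := @gal_root g a b0 c0 Fb Fc E Hg.
have Rh := @gal_root h a b0 c0 Fb Fc E Hh.
have eg := iff g Hg. have eh := iff h Hh. have egh := iff _ Hgh.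
rewrite /deltaF.
case: excluded_middle_informative => Dgh;
  case: excluded_middle_informative => Dg;
  case: excluded_middle_informative => Dh; rewrite ?mulr1 ?mul1r ?mulrNN ?mulr1 //; exfalso.
- move/egh: Dgh => /= Dgh; move/eg: Dg => Dg.
  have Dh' : h a <> a by move=> e; apply: Dh; apply/eh.
  case: Rh => // Rh; apply: ne; by rewrite -[RHS]Dgh Rh gsub Dg.
- move/egh: Dgh => /= Dgh; move/eh: Dh => Dh.
  by apply: Dg; apply/eg; rewrite -[RHS]Dgh Dh.
- move/eg: Dg => Dg; move/eh: Dh => Dh.
  by apply: Dgh; apply/egh => /=; rewrite Dh Dg.
- have Dg' : g a <> a by move=> e; apply: Dg; apply/eg.
  have Dh' : h a <> a by move=> e; apply: Dh; apply/eh.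
  case: Rh => // Rh; case: Rg => // Rg.
  by apply: Dgh; apply/egh => /=; rewrite Rh gsub Rg; ring.
Qed.
End Quad.
Lemma unit_neq0 (K : fieldType) n (P : 'M[K]_n) : (0 < n)%N -> P \in unitmx -> P != 0.
Proof.
case: n P => // n P _ uP; apply/eqP => P0; move: uP; rewrite P0 unitmxE det0.
by rewrite unitr0.
Qed.

Lemma comm_lemma (K : fieldType) n (A P Q B : 'M[K]_n) (mu : K) :
  A \in unitmx -> P \in unitmx -> mu != 0 ->
  A *m P *m B = mu *: P -> A *m Q *m B = mu *: Q ->
  A *m (Q *m invmx P) = (Q *m invmx P) *m A.
Proof.
move=> uA uP mu0 h1 h2.
have hB : B = mu *: (invmx P *m invmx A *m P).
  have -> : B = invmx P *m invmx A *m (A *m P *m B).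
    by rewrite !mulmxA mulmxKV // mulVmx // mul1mx.
  by rewrite h1 scalemxAr.
move: h2; rewrite hB -scalemxAr => /(scalerI mu0) h2.
have h3 : A *m (Q *m invmx P) *m invmx A = Q *m invmx P.
  by rewrite -[in RHS]h2 !mulmxA mulmxK.
by rewrite -{2}h3 mulmxKV.
Qed.
Lemma schur (K : closedFieldType) (F : algC -> Prop) n
  (r : (algC -> algC) -> 'M[K]_n) (N : 'M[K]_n) :
  irreducible_rep F r ->
  (forall g, in_Gal F g -> N *m r g = r g *m N) ->
  exists l, N = l%:M.
Proof.
move=> [n0 irr] Hc.
have : size (char_poly N) != 1%N by rewrite size_char_poly; case: n n0 {r irr Hc N}.
case/closed_rootP=> l; rewrite -eigenvalue_root_char => Hl.
exists l.
have := irr (kermx (N - l%:M)).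
case.
- move=> g Hg; rewrite sub_kermx -mulmxA mulmxBr -Hc // scalar_mxC -mulmxBl.
  by rewrite mulmxA mulmx_ker mul0mx.
- by move=> H0; move: Hl; rewrite /eigenvalue /eigenspace H0 eqxx.
- rewrite -sub1mx sub_kermx mul1mx subr_eq0 => /eqP //.
Qed.

Lemma pol_unique (K : closedFieldType) (F : algC -> Prop) n
  (r : (algC -> algC) -> 'M[K]_n) mu c e1 e2 P Q :
  irreducible_rep F r ->
  (forall g, in_Gal F g -> r g \in unitmx) ->
  (forall g, in_Gal F g -> mu g != 0) ->
  polarization_at F r mu c e1 P -> polarization_at F r mu c e2 Q -> e1 = e2.
Proof.
move=> irr ur nmu [uP tP hP] [uQ tQ hQ].
have n0 := irr.1.
have [l hl] : exists l, (Q *m invmx P)^T = l%:M.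
  apply: (@schur K F n r _ irr) => g Hg.
  have uA : (r g)^T \in unitmx by rewrite unitmx_tr ur.
  move: (@comm_lemma _ _ _ _ _ _ _ uA uP (nmu g Hg) (hP g Hg) (hQ g Hg)) => /(congr1 trmx).
  by rewrite !trmx_mul trmxK.
have hQl : Q = l *: P.
  have -> : Q = Q *m invmx P *m P by rewrite mulmxKV.
  by rewrite -[Q *m invmx P]trmxK hl tr_scalar_mx mul_scalar_mx.
have l0 : l != 0.
  apply/eqP=> l0; move: (@unit_neq0 _ _ _ n0 uQ); rewrite hQl l0 scale0r eqxx //.
have P0 := @unit_neq0 _ _ _ n0 uP.
move: tQ; rewrite hQl linearZ /= tP scalerA scalerA => /eqP.
rewrite -subr_eq0 -scalerBl scalemx_eq0 (negbTE P0) orbF subr_eq0 mulrC => /eqP.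
by move=> H; apply: (mulIf l0).
Qed.

Lemma tens_scale (K : fieldType) m1 n1 p q a b (A : 'M[K]_(m1,n1)) (B : 'M[K]_(p,q)) :
  (a *: A) *t (b *: B) = (a * b) *: (A *t B).
Proof. by apply/matrixP => i j; rewrite !mxE mulrACA. Qed.

Lemma tens_pol (K : fieldType) (F : algC -> Prop) n m
  (r : (algC -> algC) -> 'M[K]_n) (s : (algC -> algC) -> 'M[K]_m) mu chi c P1 P2 :
  (0 < n)%N -> (0 < m)%N ->
  polarization_at F r mu c 1 P1 -> polarization_at F s chi c 1 P2 ->
  polarization_at F (tens_rep r s) (tens_char F mu chi) c 1 (P1 *t P2).
Proof.
move=> n0 m0 [u1 t1 h1] [u2 t2 h2]; split.
- by apply: tensmx_unit => //; rewrite -lt0n.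
- by rewrite trmx_tens t1 t2 !scale1r.
- move=> g Hg; rewrite /tens_rep /tens_char trmx_tens !tensmx_mul h1 // h2 //.
  by rewrite tens_scale deltaF_galF // mulr1.
Qed.

Lemma odd_char (K : closedFieldType) (F Fp : algC -> Prop) n
  (r : (algC -> algC) -> 'M[K]_n) mu :
  irreducible_rep F r ->
  (forall g, in_Gal F g -> r g \in unitmx) ->
  (forall g, in_Gal F g -> mu g != 0) ->
  polarized F Fp r mu ->
  (totally_odd F Fp r mu <-> forall c, complex_conj c -> mu c = -1).
Proof.
move=> irr ur nmu pr; split.
- move=> [_ H] c cc; have [P1 h1] := H c cc.
  have [eps [P [_ hP e]]] := pr.2 c cc.
  have := @pol_unique _ _ _ _ _ _ _ _ _ _ irr ur nmu h1 hP.
  by rewrite e => /eqP; rewrite eq_sym eqr_oppLR => /eqP.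
- move=> H; split => // c cc.
  have [eps [P [_ hP e]]] := pr.2 c cc.
  by exists P; move: hP; rewrite e H // opprK.
Qed.

Lemma odd_pol (K : fieldType) (char0 : [pchar K] =i pred0) (F Fp : algC -> Prop) n
  (r : (algC -> algC) -> 'M[K]_n) mu :
  odd n -> polarized F Fp r mu -> totally_odd F Fp r mu.
Proof.
move=> hn pr; split => // c cc.
have [eps [P [Heps hP _]]] := pr.2 c cc.
case: Heps => e; subst eps; first by exists P.
exfalso; case: hP => uP tP _.
have := congr1 determinant tP; rewrite det_tr detZ -signr_odd hn expr1 mulN1r.
move=> /eqP; rewrite -subr_eq0 opprK -mulr2n -mulr_natr mulf_eq0.
have -> : (2%:R == 0 :> K) = false by move/pcharf0P: char0 => ->.
rewrite orbF => /eqP d0.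
by move: uP; rewrite unitmxE d0 unitr0.
Qed.

Theorem lemma2p9 (K : closedFieldType) (char0 : [pchar K] =i pred0)
  (F Fp : algC -> Prop) (hCM : CM_pair F Fp)
  (n m : nat)
  (rho : (algC -> algC) -> 'M[K]_n) (sigma : (algC -> algC) -> 'M[K]_m)
  (mu chi : (algC -> algC) -> K)
  (hrho : is_rep F rho) (hsigma : is_rep F sigma)
  (irho : irreducible_rep F rho) (isigma : irreducible_rep F sigma)
  (prho : polarized F Fp rho mu) (psigma : polarized F Fp sigma chi) :
  (odd n -> totally_odd F Fp rho mu) /\
  (irreducible_rep F (tens_rep rho sigma) ->
   let P1 := totally_odd F Fp rho mu in
   let P2 := totally_odd F Fp sigma chi in
   let P3 := totally_odd F Fp (tens_rep rho sigma) (tens_char F mu chi) in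
   (P1 /\ P2) \/ (P1 /\ P3) \/ (P2 /\ P3) -> [/\ P1, P2 & P3]).
Proof.
have n0 := irho.1; have m0 := isigma.1.
split; first by move=> hn; exact: (@odd_pol _ char0 _ _ _ _ _ hn prho).
move=> itens P1 P2 P3 H.
have urho g (Hg : in_Gal F g) : rho g \in unitmx := (hrho g g Hg Hg).1.
have usig g (Hg : in_Gal F g) : sigma g \in unitmx := (hsigma g g Hg Hg).1.
have nmu g (Hg : in_Gal F g) : mu g != 0 :=
  (prho.1 g g (@galF_galFp F Fp hCM g Hg) (@galF_galFp F Fp hCM g Hg)).1.
have nchi g (Hg : in_Gal F g) : chi g != 0 :=
  (psigma.1 g g (@galF_galFp F Fp hCM g Hg) (@galF_galFp F Fp hCM g Hg)).1.
have utens g (Hg : in_Gal F g) : tens_rep rho sigma g \in unitmx.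
  by apply: tensmx_unit; rewrite -?lt0n ?urho ?usig.
have ntens g (Hg : in_Gal F g) : tens_char F mu chi g != 0.
  by rewrite /tens_char deltaF_galF // mulr1 mulf_neq0 ?nmu ?nchi.
have E1 := @odd_char _ _ _ _ _ _ irho urho nmu prho.
have E2 := @odd_char _ _ _ _ _ _ isigma usig nchi psigma.
have tc c (cc : complex_conj c) : tens_char F mu chi c = - (mu c * chi c).
  by rewrite /tens_char (@deltaF_conj F Fp hCM) // mulrN1.
have ischar : is_character Fp (tens_char F mu chi).
  move=> g h Hg Hh; have [mg mgh] := prho.1 g h Hg Hh.
  have [cg cgh] := psigma.1 g h Hg Hh.
  split.
    rewrite /tens_char !mulf_neq0 // /deltaF.
    by case: (excluded_middle_informative (in_Gal F g)) => ? /=; rewrite ?oppr_eq0 oner_eq0.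
  rewrite /tens_char mgh cgh. rewrite (@deltaF_mul F Fp hCM K g h Hg Hh). ring.
case: H => [[h1 h2] | [[h1 h3] | [h2 h3]]].
- have pt : polarized F Fp (tens_rep rho sigma) (tens_char F mu chi).
    split => // c cc.
    have [e1 [Q1 [_ hQ1 ee1]]] := prho.2 c cc.
    have [e2 [Q2 [_ hQ2 ee2]]] := psigma.2 c cc.
    move: hQ1 hQ2; rewrite ee1 ee2 (E1.1 h1 c cc) (E2.1 h2 c cc) opprK => hQ1 hQ2.
    exists 1, (Q1 *t Q2); split; first by left.
      exact: tens_pol.
    by rewrite tc // (E1.1 h1 c cc) (E2.1 h2 c cc) mulrNN mulr1 opprK.
  split => //; apply/(@odd_char _ _ _ _ _ _ itens utens ntens pt) => c cc.
  by rewrite tc // (E1.1 h1 c cc) (E2.1 h2 c cc) mulrNN mulr1.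
- have E3 := @odd_char _ _ _ _ _ _ itens utens ntens h3.1.
  split => //; apply/E2 => c cc.
  have := E3.1 h3 c cc; rewrite tc // (E1.1 h1 c cc) mulN1r opprK.
  by [].
- have E3 := @odd_char _ _ _ _ _ _ itens utens ntens h3.1.
  split => //; apply/E1 => c cc.
  have := E3.1 h3 c cc; rewrite tc // (E2.1 h2 c cc) mulrN1 opprK.
  by [].
Qed.
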